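(* Let $n\ge3$ and let $M$ be a polytope in $\mathbb{R}^n$ with $rB\subseteq M\subseteq RB$ for some $r,R>0$. Then for every pair of neighboring facets $F\sim F'$, $$\tan\Big(\frac{l_{F,F'}}2\Big)\le\frac Rr,\qquad\text{and in particular}\qquad l_{F,F'}^2\le\pi^2\Big(1-\frac{r^2}{R^2+r^2}\Big).$$
   Context: $B$ is the unit ball. Facets $F,F'$ of $M$ are neighbors if $\dim(F\cap F')=n-2$; $n_F$ is the outer unit normal of $F$; $l_{F,F'}$ is the geodesic distance on $S^{n-1}$ between $n_F$ and $n_{F'}$ (i.e. $\cos l_{F,F'}=\langle n_F,n_{F'}\rangle$, $l_{F,F'}\in[0,\pi]$). *)

(* Defs.v *)
From HB Require Import structures.
From mathcomp Require Import all_boot all_order all_algebra.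
From mathcomp Require Import all_classical all_reals all_analysis.
Set Implicit Arguments. Unset Strict Implicit. Unset Printing Implicit Defensive.
Import Order.TTheory GRing.Theory Num.Theory.
Local Open Scope ring_scope.
Local Open Scope classical_set_scope.

Section PolytopeDefs.
Variables (R : realType) (n : nat).
Notation V := 'rV[R]_n.

Definition dotp (u v : V) : R := \sum_(i < n) u 0 i * v 0 i.
Definition enorm (u : V) : R := Num.sqrt (dotp u u).

Definition cball (r : R) : set V := [set x | enorm x <= r].

Definition conv_hull (k : nat) (p : 'I_k -> V) : set V :=
  [set x | exists lam : 'I_k -> R,
      (forall i, 0 <= lam i) /\ \sum_(i < k) lam i = 1 /\
      x = \sum_(i < k) lam i *: p i].

Definition polytope (M : set V) : Prop :=
  exists (k : nat) (p : 'I_k -> V), M = conv_hull p.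

Definition has_aff_indep (S : set V) (k : nat) : Prop :=
  exists p : 'I_k.+1 -> V, (forall i, S (p i)) /\
    row_free (\matrix_(i < k) (p (lift ord0 i) - p ord0)).

Definition affdim (S : set V) (k : nat) : Prop :=
  has_aff_indep S k /\ ~ has_aff_indep S k.+1.

Definition facet_with_normal (M F : set V) (u : V) : Prop :=
  enorm u = 1 /\
  exists b : R, (forall x, M x -> dotp u x <= b) /\
    F = M `&` [set x | dotp u x = b] /\ affdim F (n.-1).

Definition is_facet (M F : set V) : Prop := exists u, facet_with_normal M F u.

Definition neighbors (M F F' : set V) : Prop :=
  is_facet M F /\ is_facet M F' /\ affdim (F `&` F') (n.-2).

Definition geod (u v : V) : R := acos (dotp u v).

End PolytopeDefs.

(* Main.v *)
Require Import Defs.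
From HB Require Import structures.
From mathcomp Require Import all_boot all_order all_algebra.
From mathcomp Require Import all_classical all_reals all_analysis.
From mathcomp Require Import ring lra.
Import Order.TTheory GRing.Theory Num.Theory numFieldNormedType.Exports.
Set Implicit Arguments. Unset Strict Implicit. Unset Printing Implicit Defensive.
Local Open Scope ring_scope.
Local Open Scope classical_set_scope.

Lemma poly_ineq (R : realType) (p f : R) : 0 <= f -> 2 * f <= p -> p < 4 ->
  (p - 2 * f) ^+ 2 * (1 + f ^+ 2) <= p ^+ 2.
Proof.
move=> f0 fp p4.
set x := p - 2 * f.
have x0 : 0 <= x by rewrite /x; lra.
have p0 : 0 <= p by lra.
have hp2 : p * p <= 16 by nra.
have hx : x * (p - x) <= 4 by have := sqr_ge0 (x - p / 2); nra.
have h2 : x ^+ 2 * (p - x) <= 4 * x by nra.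
have e : f = (p - x) / 2 by rewrite /x; field.
rewrite e; nra.
Qed.

Lemma sin_le_id (R : realType) (x : R) : 0 <= x -> sin x <= x.
Proof.
move=> x0.
have hd : forall y, y \in `]0, x[%R -> is_derive y 1 (@sin R) (cos y).
  by move=> y _; exact: is_derive_sin.
have [|c _ h] := @MVT_segment R sin cos 0 x x0 hd.
  exact/continuous_subspaceT/continuous_sin.
move: h; rewrite sin0 !subr0 => ->; have := cos_le1 c; nra.
Qed.
Section Dot.
Variables (R : realType) (n : nat).
Implicit Types a c x : 'rV[R]_n.

Lemma dotp_sos a x s t :
  2 * s * t * dotp a x <= s ^+ 2 * dotp a a + t ^+ 2 * dotp x x.
Proof.
rewrite -subr_ge0 /dotp !mulr_sumr -big_split -sumrB /=.
apply: sumr_ge0 => i _.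
have -> : s ^+ 2 * (a 0 i * a 0 i) + t ^+ 2 * (x 0 i * x 0 i) -
   2 * s * t * (a 0 i * x 0 i) = (s * a 0 i - t * x 0 i) ^+ 2 by ring.
exact: sqr_ge0.
Qed.

Lemma dotp_ge0 a : 0 <= dotp a a.
Proof. by apply: sumr_ge0 => i _; rewrite -expr2 sqr_ge0. Qed.

Lemma dotpZr a x (k : R) : dotp a (k *: x) = k * dotp a x.
Proof. by rewrite /dotp mulr_sumr; apply: eq_bigr => i _; rewrite mxE; ring. Qed.

Lemma dotpDl a c x : dotp (a + c) x = dotp a x + dotp c x.
Proof. by rewrite /dotp -big_split; apply: eq_bigr => i _; rewrite !mxE /=; ring. Qed.

Lemma dotpC a x : dotp a x = dotp x a.
Proof. by apply: eq_bigr => i _; ring. Qed.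

Lemma enorm_sq a : enorm a ^+ 2 = dotp a a.
Proof. by rewrite /enorm sqr_sqrtr // dotp_ge0. Qed.

End Dot.

Theorem lemma7p5 (R : realType) (n : nat) (hn : (3 <= n)%N)
  (M : set 'rV[R]_n) (r Rad : R) (hr : 0 < r) (hR : 0 < Rad)
  (hM : polytope M) (hrM : cball r `<=` M) (hMR : M `<=` cball Rad)
  (F F' : set 'rV[R]_n) (u u' : 'rV[R]_n)
  (hF : facet_with_normal M F u) (hF' : facet_with_normal M F' u')
  (hnb : neighbors M F F') :
  tan (geod u u' / 2) <= Rad / r /\
  geod u u' ^+ 2 <= pi ^+ 2 * (1 - r ^+ 2 / (Rad ^+ 2 + r ^+ 2)).
Proof.
case: hF => hu [b [hb [eF _]]].
case: hF' => hu' [b' [hb' [eF' _]]].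
case: hnb => _ [_ [[p [hp _]] _]].
have := hp ord0; rewrite eF eF' /= => -[[xM xb] [_ xb']].
set x := p ord0 in xM xb xb'.
have uu : dotp u u = 1 by rewrite -enorm_sq hu expr1n.
have uu' : dotp u' u' = 1 by rewrite -enorm_sq hu' expr1n.
have inball : forall v : 'rV[R]_n, dotp v v = 1 -> cball r (r *: v).
  move=> v vv; rewrite /cball /= /enorm dotpZr dotpC dotpZr vv mulr1 -expr2.
  by rewrite sqrtr_sqr ger0_norm // ltW.
have rb : r <= b.
  by have := hb _ (hrM _ (inball _ uu)); rewrite dotpZr uu mulr1.
have rb' : r <= b'.
  by have := hb' _ (hrM _ (inball _ uu')); rewrite dotpZr uu' mulr1.
have xx : dotp x x <= Rad ^+ 2.
  have := hMR _ xM; rewrite /cball /= => hx.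
  have e0 : 0 <= enorm x by exact: sqrtr_ge0.
  rewrite -enorm_sq; nra.
set d := dotp u u'.
have d1 : d <= 1 by have := dotp_sos u u' 1 1; rewrite uu uu' -/d; lra.
have d2 : -1 <= d by have := dotp_sos u u' 1 (-1); rewrite uu uu' -/d; lra.
have e1 : dotp (u + u') x = b + b' by rewrite dotpDl xb xb'.
have e2 : dotp (u + u') (u + u') = 2 + 2 * d.
  rewrite !dotpDl (dotpC u (u + u')) (dotpC u' (u + u')) !dotpDl uu uu' (dotpC u' u) -/d.
  ring.
have key : 2 * r ^+ 2 <= Rad ^+ 2 * (1 + d).
  have := dotp_sos (u + u') x (Rad ^+ 2) (2 * r); rewrite e1 e2 => h.
  have R2 : 0 < Rad ^+ 2 by rewrite exprn_gt0.
  have h3 : 8 * Rad ^+ 2 * r ^+ 2 <= 2 * Rad ^+ 2 * (2 * r) * (b + b') by nra.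
  have h4 : (2 * r) ^+ 2 * dotp x x <= (2 * r) ^+ 2 * Rad ^+ 2.
    by rewrite ler_wpM2l // sqr_ge0.
  nra.
rewrite /geod -/d.
have hd : -1 <= d <= 1 by rewrite d1 d2.
have cL : cos (acos d) = d by rewrite acosK // in_itv /= hd.
have L0 := acos_ge0 hd.
have Lpi := acos_lepi hd.
set L := acos d in cL L0 Lpi *.
set th := L / 2.
have eL : L = th *+ 2 by rewrite /th mulr2n; field.
have cth : cos th ^+ 2 *+ 2 - 1 = d by rewrite -cos_mulr2n -eL.
rewrite mulr2n in cth.
have cth0 : 0 <= cos th by apply: cos_ge0_pihalf; rewrite /th; apply/andP; split; lra.
have rc2 : r ^+ 2 <= (Rad * cos th) ^+ 2.
  rewrite exprMn; have -> : cos th ^+ 2 = (1 + d) / 2 by rewrite -cth; field.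
  lra.
have Rc0 : 0 <= Rad * cos th by rewrite mulr_ge0 // ltW.
have rc : r <= Rad * cos th by nra.
have cthp : 0 < cos th by nra.
split.
  rewrite /tan ler_pdivrMr // mulrAC ler_pdivlMr //.
  have := sin_le1 th; nra.
set ph := pi / 2 - th.
have sph : sin ph = cos th by rewrite /ph -opprB sinN sinBpihalf opprK.
have ph0 : 0 <= ph by rewrite /ph /th; lra.
have rph : r <= Rad * ph by have := sin_le_id ph0; rewrite sph; nra.
have pi4 : (pi : R) < 4.
  have h := @pihalf_lt2 R; lra.
have hpoly := poly_ineq ph0 (_ : 2 * ph <= pi) pi4.
have eL2 : L = pi - 2 * ph by rewrite /ph /th; field.
have -> : 1 - r ^+ 2 / (Rad ^+ 2 + r ^+ 2) = Rad ^+ 2 / (Rad ^+ 2 + r ^+ 2).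
  by field; rewrite lt0r_neq0 // ?addr_gt0 ?exprn_gt0.
have Rr : 0 < Rad ^+ 2 + r ^+ 2 by rewrite addr_gt0 ?exprn_gt0.
rewrite mulrA ler_pdivlMr //.
have hp2 : (pi - 2 * ph) ^+ 2 * (1 + ph ^+ 2) <= pi ^+ 2 by apply: hpoly; rewrite /ph /th; lra.
have r2 : r ^+ 2 <= Rad ^+ 2 * ph ^+ 2 by nra.
rewrite eL2.
have := sqr_ge0 (pi - 2 * ph); nra.
Qed.
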